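(* Let $\mathbb{K}$ be a field, $q\in\mathbb{K}^*$ not a root of unity, and $R=\mathcal{O}_q(M_3)$. Let $\sigma$ be a $\mathbb{K}$-algebra automorphism of $R$ such that $\sigma(Y_{i,\alpha})-Y_{i,\alpha}\in R_{\ge2}$ for all $(i,\alpha)\in\{1,2,3\}^2$, and let $[I|\Lambda]$ be a $t\times t$ quantum minor. Then $\sigma([I|\Lambda])-[I|\Lambda]\in R_{\ge t+1}$. Consequently, $\sigma([I|\Lambda])=[I|\Lambda]$ if and only if $\deg(\sigma([I|\Lambda]))=t$.
   Context: $\mathcal{O}_q(M_3)$ is the $\mathbb{K}$-algebra generated by $Y_{i,\alpha}$, $1\le i,\alpha\le 3$, subject to: $Y_{i,\beta}Y_{i,\alpha}=q^{-1}Y_{i,\alpha}Y_{i,\beta}$ for $\alpha<\beta$; $Y_{j,\alpha}Y_{i,\alpha}=q^{-1}Y_{i,\alpha}Y_{j,\alpha}$ for $i<j$; $Y_{j,\beta}Y_{i,\alpha}=Y_{i,\alpha}Y_{j,\beta}$ for $i<j$, $\alpha>\beta$; $Y_{j,\beta}Y_{i,\alpha}=Y_{i,\alpha}Y_{j,\beta}-(q-q^{-1})Y_{i,\beta}Y_{j,\alpha}$ for $i<j$, $\alpha<\beta$. It is $\mathbb{N}$-graded $R=\bigoplus R_i$ with each $Y_{i,\alpha}$ of degree 1; $R_{\ge d}=\bigoplus_{i\ge d}R_i$; for nonzero $x\in R$, $\deg(x)$ is the largest $d$ with nonzero component of $x$ in $R_d$. For $I=\{i_1<\dots<i_t\}$,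 $\Lambda=\{\alpha_1<\dots<\alpha_t\}\subseteq\{1,2,3\}$, the quantum minor is $[I|\Lambda]=\sum_{w\in S_t}(-q)^{l(w)}Y_{i_1,\alpha_{w(1)}}\cdots Y_{i_t,\alpha_{w(t)}}$. *)

(* Defs.v *)
From HB Require Import structures.
From mathcomp Require Import all_boot all_order all_fingroup all_algebra.
Set Implicit Arguments. Unset Strict Implicit. Unset Printing Implicit Defensive.
Import Order.TTheory GRing.Theory Num.Theory.
Local Open Scope ring_scope.

(* Generators are indexed by (i, alpha) in 'I_3 * 'I_3 (0-based: 'I_3 = {0,1,2}
   stands for {1,2,3}). *)
Section Rels.
Variables (K : fieldType) (A : algType K).
Definition qM3_rels (q : K) (Y : 'I_3 -> 'I_3 -> A) : Prop :=
  [/\ (forall (i a b : 'I_3), (a < b)%N ->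
         Y i b * Y i a = q^-1 *: (Y i a * Y i b)),
      (forall (i j a : 'I_3), (i < j)%N ->
         Y j a * Y i a = q^-1 *: (Y i a * Y j a)),
      (forall (i j a b : 'I_3), (i < j)%N -> (b < a)%N ->
         Y j b * Y i a = Y i a * Y j b) &
      (forall (i j a b : 'I_3), (i < j)%N -> (a < b)%N ->
         Y j b * Y i a = Y i a * Y j b - (q - q^-1) *: (Y i b * Y j a))].

End Rels.

Section QMat.
Variables (K : fieldType) (A : algType K).

Definition wprod (Y : 'I_3 -> 'I_3 -> A) (w : seq ('I_3 * 'I_3)) : A :=
  \prod_(p <- w) Y p.1 p.2.

Definition in_wspan (Y : 'I_3 -> 'I_3 -> A) (P : nat -> bool) (x : A) : Prop :=
  exists cs : seq (K * seq ('I_3 * 'I_3)),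
    all (fun c => P (size c.2)) cs /\ x = \sum_(c <- cs) c.1 *: wprod Y c.2.

Definition R_ge Y (d : nat) (x : A) : Prop := in_wspan Y (fun n => d <= n)%N x.
Definition R_le Y (d : nat) (x : A) : Prop := in_wspan Y (fun n => n <= d)%N x.
Definition R_lt Y (d : nat) (x : A) : Prop := in_wspan Y (fun n => n < d)%N x.

(* deg x = d : the largest degree with a nonzero homogeneous component is d,
   i.e. all components of degree > d vanish and the one of degree d does not. *)
Definition deg_is Y (x : A) (d : nat) : Prop :=
  x != 0 /\ R_le Y d x /\ ~ R_lt Y d x.

(* (A, Y) is a presentation of O_q(M_3): Y satisfies the relations, Y generates
   A as a K-algebra, and (A, Y) has the universal property. *)
Definition is_Oq_M3 (q : K) (Y : 'I_3 -> 'I_3 -> A) : Prop :=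
  [/\ qM3_rels q Y,
      (forall x : A, in_wspan Y predT x) &
      (forall (B : algType K) (Z : 'I_3 -> 'I_3 -> B), qM3_rels q Z ->
         exists f : {lrmorphism A -> B}, forall i a, f (Y i a) = Z i a)].

Definition sorted_idx (I : {set 'I_3}) : seq 'I_3 := [seq x <- enum 'I_3 | x \in I].

Definition perm_length t (w : 'S_t) : nat :=
  #|[set p : 'I_t * 'I_t | (p.1 < p.2)%N && (w p.2 < w p.1)%N]|.

Definition qminor (q : K) (Y : 'I_3 -> 'I_3 -> A) (I L : {set 'I_3}) : A :=
  \sum_(w : 'S_#|I|) ((- q) ^+ perm_length w) *:
     \prod_(k < #|I|) Y (nth ord0 (sorted_idx I) k) (nth ord0 (sorted_idx L) (w k)).

End QMat.

(* Main.v *)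
Require Import Defs.
From HB Require Import structures.
From mathcomp Require Import all_boot all_order all_fingroup all_algebra.
Import GRing.Theory.
Local Open Scope ring_scope.

Section Span.
Variables (K : fieldType) (A : algType K) (Y : 'I_3 -> 'I_3 -> A).
Implicit Types (P Q S : nat -> bool) (x y : A).

Lemma ws0 P : in_wspan Y P 0.
Proof. by exists [::]; rewrite big_nil. Qed.

Lemma wsD P x y : in_wspan Y P x -> in_wspan Y P y -> in_wspan Y P (x + y).
Proof.
move=> [c1 [h1 ->]] [c2 [h2 ->]]; exists (c1 ++ c2).
by rewrite all_cat h1 h2 big_cat.
Qed.

Lemma wsZ P x (c : K) : in_wspan Y P x -> in_wspan Y P (c *: x).
Proof.
move=> [cs [h ->]]; exists [seq (c * e.1, e.2) | e <- cs]; split.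
  by rewrite all_map; apply: sub_all h => e.
rewrite big_map scaler_sumr; apply: eq_bigr => e _; by rewrite scalerA.
Qed.

Lemma wsB P x y : in_wspan Y P x -> in_wspan Y P y -> in_wspan Y P (x - y).
Proof. by move=> hx hy; apply: wsD => //; rewrite -scaleN1r; apply: wsZ. Qed.

Lemma wsW P Q x : (forall n, P n -> Q n) -> in_wspan Y P x -> in_wspan Y Q x.
Proof. by move=> hPQ [cs [h ->]]; exists cs; split=> //; apply: sub_all h => e /hPQ. Qed.

Lemma ws_sum (T : eqType) (r : seq T) (F : T -> A) P :
  (forall i, i \in r -> in_wspan Y P (F i)) -> in_wspan Y P (\sum_(i <- r) F i).
Proof.
elim: r => [|i r IH] h; first by rewrite big_nil; apply: ws0.
rewrite big_cons; apply: wsD; first by apply: h; rewrite mem_head.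
by apply: IH => j hj; apply: h; rewrite inE hj orbT.
Qed.

Lemma ws_word P (c : K) w : P (size w) -> in_wspan Y P (c *: wprod Y w).
Proof. by move=> h; exists [:: (c, w)]; rewrite /= h big_seq1. Qed.

Lemma wprod_cat w1 w2 : wprod Y (w1 ++ w2) = wprod Y w1 * wprod Y w2.
Proof. by rewrite /wprod big_cat. Qed.

Lemma wsM P Q S x y : (forall a b, P a -> Q b -> S (a + b)%N) ->
  in_wspan Y P x -> in_wspan Y Q y -> in_wspan Y S (x * y).
Proof.
move=> hS [c1 [h1 ->]] [c2 [h2 ->]].
rewrite mulr_suml; apply: ws_sum => c hc; rewrite mulr_sumr; apply: ws_sum => d hd.
rewrite -scalerAl -scalerAr scalerA -wprod_cat; apply: ws_word.
rewrite size_cat; apply: hS.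
  by move/allP: h1 => /(_ c hc).
by move/allP: h2 => /(_ d hd).
Qed.

Lemma ws_Y P i a : P 1%N -> in_wspan Y P (Y i a).
Proof.
move=> h; have -> : Y i a = 1 *: wprod Y [:: (i, a)] by rewrite /wprod big_seq1 scale1r.
exact: ws_word.
Qed.

End Span.

Section Sep.
Variables (K : fieldType) (A : algType K) (Y : 'I_3 -> 'I_3 -> A) (q : K).
Hypothesis Hq0 : q != 0.
Hypothesis Hqn : forall n : nat, (0 < n)%N -> q ^+ n != 1.
Variable g : {lrmorphism A -> A}.
Hypothesis Hg : forall i a, g (Y i a) = q *: Y i a.

Lemma gZ (c : K) x : g (c *: x) = c *: g x. Proof. exact: linearZ. Qed.
Lemma gD x y : g (x + y) = g x + g y. Proof. exact: raddfD. Qed.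
Lemma gB x y : g (x - y) = g x - g y. Proof. exact: raddfB. Qed.
Lemma g0 : g 0 = 0. Proof. exact: raddf0. Qed.
Lemma gsum (T : Type) (r : seq T) (P : pred T) (F : T -> A) :
  g (\sum_(i <- r | P i) F i) = \sum_(i <- r | P i) g (F i).
Proof. exact: raddf_sum. Qed.

Lemma qpow_inj m n : m != n -> q ^+ m != q ^+ n.
Proof.
wlog lt : m n / (m < n)%N.
  move=> W hne; case: (ltngtP m n) => h.
  - exact: W.
  - by rewrite eq_sym; apply: W => //; rewrite eq_sym.
  - by rewrite h eqxx in hne.
move=> _; rewrite -(subnKC (ltnW lt)) exprD; apply/negP => /eqP h.
have : q ^+ (n - m) = 1.
  apply: (mulfI (expf_neq0 m Hq0)); by rewrite mulr1 -h.
by apply/eqP; apply: Hqn; rewrite subn_gt0.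
Qed.

Lemma g_wprod w : g (wprod Y w) = q ^+ size w *: wprod Y w.
Proof.
elim: w => [|p w IH]; first by rewrite /wprod big_nil rmorph1 expr0 scale1r.
have -> : wprod Y (p :: w) = Y p.1 p.2 * wprod Y w by rewrite /wprod big_cons.
rewrite rmorphM; change (g (Y p.1 p.2) * g (wprod Y w) = q ^+ size (p :: w) *: (Y p.1 p.2 * wprod Y w)); rewrite IH Hg -scalerAl -scalerAr scalerA.
by rewrite /= exprS.
Qed.

Lemma eig_indep (s : seq nat) (x : nat -> A) : uniq s ->
  (forall d, g (x d) = q ^+ d *: x d) -> \sum_(d <- s) x d = 0 ->
  forall d, d \in s -> x d = 0.
Proof.
elim: s x => [|d0 s IH] x //= /andP [nd0 us] hx.
rewrite big_cons => hsum.
pose x' d := (q ^+ d - q ^+ d0) *: x d.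
have hx' : forall d, g (x' d) = q ^+ d *: x' d.
  by move=> d; rewrite /x' gZ hx !scalerA mulrC.
have hs' : \sum_(d <- s) x' d = 0.
  have := congr1 (fun z => g z - q ^+ d0 *: z) hsum.
  rewrite /= g0 scaler0 subr0 gD hx gsum scalerDr.
  rewrite opprD addrACA subrr add0r scaler_sumr -sumrB => H; apply: etrans H.
  by apply: eq_bigr => d _; rewrite hx /x' scalerBl.
have hs : forall d, d \in s -> x d = 0.
  move=> d hd; have := IH x' us hx' hs' d hd.
  have hne : d != d0 by apply: contraNneq nd0 => <-.
  by move/eqP; rewrite scaler_eq0 subr_eq0 (negbTE (qpow_inj _ _ hne)) orFb => /eqP.
have h0 : x d0 = 0.
  by move: hsum; rewrite big_seq big1 ?addr0 // => d; apply: hs.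
by move=> d; rewrite inE => /orP [/eqP -> | /hs].
Qed.

Definition Comp d (cs : seq (K * seq ('I_3 * 'I_3))) :=
  \sum_(c <- cs | size c.2 == d) c.1 *: wprod Y c.2.

Lemma Comp_eig d cs : g (Comp d cs) = q ^+ d *: Comp d cs.
Proof.
rewrite /Comp gsum scaler_sumr; apply: eq_bigr => c /eqP hc.
by rewrite gZ g_wprod hc !scalerA mulrC.
Qed.

Lemma sum_Comp N cs : (forall c, c \in cs -> size c.2 < N)%N ->
  \sum_(c <- cs) c.1 *: wprod Y c.2 = \sum_(d <- iota 0 N) Comp d cs.
Proof.
move=> hN; rewrite /Comp.
under [RHS]eq_bigr => d _ do rewrite big_mkcond.
rewrite exchange_big big_seq_cond [RHS]big_seq_cond /=; apply: eq_bigr => c /andP [hc _].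
have hin : size c.2 \in iota 0 N by rewrite mem_iota add0n /= hN.
rewrite (bigD1_seq _ hin (iota_uniq 0 N)) eqxx /= big1 ?addr0 //.
by move=> d; rewrite eq_sym => /negbTE ->.
Qed.

Lemma separate (P Q : nat -> bool) x :
  in_wspan Y P x -> in_wspan Y Q x -> (forall n, P n -> Q n -> False) -> x = 0.
Proof.
move=> [c1 [h1 e1]] [c2 [h2 e2]] hPQ.
set N := (\max_(c <- c1 ++ c2) size c.2)%N.+1.
have hN : forall c, c \in c1 ++ c2 -> (size c.2 < N)%N.
  move=> c hc; rewrite ltnS; exact: (leq_bigmax_seq (F := fun c => size c.2) c hc isT).
have s1 : _ := @sum_Comp N c1 (fun c hc => hN c (ltac:(by rewrite mem_cat hc))).
have s2 : _ := @sum_Comp N c2 (fun c hc => hN c (ltac:(by rewrite mem_cat hc orbT))).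
have heq : forall d, d \in iota 0 N -> Comp d c1 - Comp d c2 = 0.
  apply: (@eig_indep _ (fun d => Comp d c1 - Comp d c2)).
  - exact: iota_uniq.
  - by move=> d; rewrite gB !Comp_eig scalerBr.
  - by rewrite sumrB -s1 -s2 -e1 -e2 subrr.
rewrite e1 s1 big_seq big1 // => d hd.
have := heq d hd; move/eqP; rewrite subr_eq0 => /eqP hd12.
case hP : (P d).
  rewrite hd12 /Comp big_seq_cond big1 // => c /andP [hc /eqP hs].
  move/allP: h2 => /(_ c hc) /= hQ.
  by exfalso; apply: (hPQ d); rewrite // -hs.
rewrite /Comp big_seq_cond big1 // => c /andP [hc /eqP hs].
move/allP: h1 => /(_ c hc) /=; by rewrite hs hP.
Qed.

End Sep.

Section Morph.
Variables (K : fieldType) (A B : algType K) (f : {lrmorphism A -> B}).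
Lemma morZ (c : K) x : f (c *: x) = c *: f x. Proof. exact: linearZ. Qed.
Lemma morD x y : f (x + y) = f x + f y. Proof. exact: raddfD. Qed.
Lemma morB x y : f (x - y) = f x - f y. Proof. exact: raddfB. Qed.
Lemma mor0 : f 0 = 0. Proof. exact: raddf0. Qed.
Lemma mor1 : f 1 = 1. Proof. exact: rmorph1. Qed.
Lemma morM x y : f (x * y) = f x * f y. Proof. exact: rmorphM. Qed.
Lemma morsum (T : Type) (r : seq T) (P : pred T) (F : T -> A) :
  f (\sum_(i <- r | P i) F i) = \sum_(i <- r | P i) f (F i).
Proof. exact: raddf_sum. Qed.
Lemma morprod (T : Type) (r : seq T) (P : pred T) (F : T -> A) :
  f (\prod_(i <- r | P i) F i) = \prod_(i <- r | P i) f (F i).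
Proof. exact: rmorph_prod. Qed.
End Morph.

Lemma sorted_idx_enum (I : {set 'I_3}) : sorted_idx I = enum I.
Proof. by rewrite /sorted_idx enumT /enum_mem. Qed.

Lemma sorted_idx_sorted (I : {set 'I_3}) :
  sorted (fun x y : 'I_3 => (x < y)%N) (sorted_idx I).
Proof.
rewrite /sorted_idx; apply: sorted_filter.
  by move=> x y z; apply: ltn_trans.
have := iota_ltn_sorted 0 3; rewrite -val_enum_ord sorted_map.
by [].
Qed.

Lemma lt_idx n (s : seq 'I_3) (k k' : 'I_n) : size s = n ->
  sorted (fun x y : 'I_3 => (x < y)%N) s ->
  (nth ord0 s k < nth ord0 s k')%N -> (k < k')%N.
Proof.
move=> hs so h; case: (ltngtP k k') => // h'.
  have := sorted_ltn_nth (fun (y x z : 'I_3) => @ltn_trans y x z) ord0 so.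
  move=> /(_ k' k); rewrite !inE hs !ltn_ord => /(_ isT isT h') h2.
  by have := ltn_trans h h2; rewrite ltnn.
by move: h; rewrite h' ltnn.
Qed.

Lemma nth_inj n (s : seq 'I_3) (k k' : 'I_n) : size s = n -> uniq s ->
  nth ord0 s k = nth ord0 s k' -> k = k'.
Proof.
move=> hs us h; apply/val_inj/eqP.
by rewrite -(nth_uniq ord0 _ _ us) ?hs ?ltn_ord // h.
Qed.

Lemma mul0_of (K : fieldType) (x y : {poly K}) : (x != 0 -> y != 0 -> False) -> x * y = 0.
Proof.
move=> H; case: (eqVneq x 0) => [->|hx]; first by rewrite mul0r.
case: (eqVneq y 0) => [->|hy]; first by rewrite mulr0.
by case: (H hx hy).
Qed.
Arguments nth_inj {n s k k'}.
Arguments lt_idx {n s k k'}.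

Section Sig.
Variables (K : fieldType) (A : algType K) (Y : 'I_3 -> 'I_3 -> A).
Variable sigma : {lrmorphism A -> A}.
Hypothesis Hs : forall i a : 'I_3, R_ge Y 2 (sigma (Y i a) - Y i a).

Lemma prodY n (fi fa : 'I_n -> 'I_3) :
  in_wspan Y (fun m => m == n) (\prod_(k < n) Y (fi k) (fa k)).
Proof.
elim: n fi fa => [|n IH] fi fa.
  rewrite big_ord0; have -> : (1 : A) = 1 *: wprod Y [::] by rewrite /wprod big_nil scale1r.
  exact: ws_word.
rewrite big_ord_recl; apply: (@wsM _ _ Y (fun m => m == 1%N) (fun m => m == n)).
- by move=> a b /eqP -> /eqP ->.
- exact: ws_Y.
- exact: IH.
Qed.

Lemma prod_diff n (fi fa : 'I_n -> 'I_3) :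
  R_ge Y n.+1 (\prod_(k < n) sigma (Y (fi k) (fa k)) - \prod_(k < n) Y (fi k) (fa k)).
Proof.
elim: n fi fa => [|n IH] fi fa.
  by rewrite !big_ord0 subrr; apply: ws0.
rewrite !big_ord_recl.
set a := sigma _; set b := Y _ _; set P' := \prod_(i < n) _; set P := \prod_(i < n) _.
have -> : a * P' - b * P = (a - b) * P' + b * (P' - P)
  by rewrite mulrBl mulrBr addrA subrK.
have HP' : R_ge Y n P'.
  rewrite -(subrK P P'); apply: wsD.
    apply: (@wsW _ _ Y (fun m => n.+1 <= m)%N); last exact: IH.
    by move=> m /ltnW.
  apply: (@wsW _ _ Y (fun m => m == n)); last exact: prodY.
  by move=> m /eqP ->.
apply: wsD.
  apply: (@wsM _ _ Y (fun m => 2 <= m)%N (fun m => n <= m)%N).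
  - by move=> x y hx hy; rewrite /= -addn2 addnC leq_add.
  - exact: Hs.
  - exact: HP'.
apply: (@wsM _ _ Y (fun m => 1 <= m)%N (fun m => n.+1 <= m)%N (fun m => n.+2 <= m)%N).
- by move=> x y hx hy; rewrite -add1n leq_add.
- exact: ws_Y.
- exact: IH.
Qed.

End Sig.

Section Pol.
Variables (K : fieldType) (q : K) (I L : {set 'I_3}).
Hypothesis hL : #|L| = #|I|.
Local Notation n := #|I|.
Local Notation s := (sorted_idx I).
Local Notation l := (sorted_idx L).

Lemma hs_size : size s = n. Proof. by rewrite sorted_idx_enum -cardE. Qed.
Lemma hl_size : size l = n. Proof. by rewrite sorted_idx_enum -cardE hL. Qed.
Lemma hs_uniq : uniq s. Proof. by rewrite sorted_idx_enum enum_uniq. Qed.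
Lemma hl_uniq : uniq l. Proof. by rewrite sorted_idx_enum enum_uniq. Qed.

Definition Z (i a : 'I_3) : {poly K} :=
  if [exists k : 'I_n, (i == nth ord0 s k) && (a == nth ord0 l k)] then 'X else 0.

Lemma Z_spec i a : Z i a != 0 -> exists k : 'I_n, i = nth ord0 s k /\ a = nth ord0 l k.
Proof.
rewrite /Z; case: existsP => [[k /andP [/eqP -> /eqP ->]] _ | _]; last by rewrite eqxx.
by exists k.
Qed.

Lemma Zkm (k m : 'I_n) : Z (nth ord0 s k) (nth ord0 l m) = if m == k then 'X else 0.
Proof.
rewrite /Z; case: existsP => [[k' /andP [/eqP h1 /eqP h2]] | hn].
  have e1 := nth_inj hs_size hs_uniq h1; have e2 := nth_inj hl_size hl_uniq h2.
  by rewrite e1 e2 eqxx.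
case: eqP => // emk; exfalso; apply: hn; exists k; by rewrite emk !eqxx.
Qed.

Lemma Z_rels : qM3_rels q Z.
Proof.
split.
- move=> i a b ab.
  have H : Z i a * Z i b = 0.
    apply: mul0_of => /Z_spec [k [ei ea]] /Z_spec [k' [e1 e2]].
    have ekk := nth_inj hs_size hs_uniq (etrans (esym ei) e1).
    move: ab; by rewrite ea e2 ekk ltnn.
  by rewrite mulrC H scaler0.
- move=> i j a ij.
  have H : Z i a * Z j a = 0.
    apply: mul0_of => /Z_spec [k [ei ea]] /Z_spec [k' [e1 e2]].
    have ekk := nth_inj hl_size hl_uniq (etrans (esym ea) e2).
    move: ij; by rewrite ei e1 ekk ltnn.
  by rewrite mulrC H scaler0.
- by move=> i j a b _ _; rewrite mulrC.
- move=> i j a b ij ab.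
  have H : Z i b * Z j a = 0.
    apply: mul0_of => /Z_spec [k [e1 e2]] /Z_spec [k' [e3 e4]].
    have h1 : (k < k')%N.
      by apply: (lt_idx hs_size (sorted_idx_sorted I)); rewrite -e1 -e3.
    have h2 : (k' < k)%N.
      by apply: (lt_idx hl_size (sorted_idx_sorted L)); rewrite -e2 -e4.
    by have := ltn_trans h1 h2; rewrite ltnn.
  by rewrite H scaler0 subr0 mulrC.
Qed.

Section WithF.
Variables (A : algType K) (Y : 'I_3 -> 'I_3 -> A) (f : {lrmorphism A -> {poly K}}).
Hypothesis hf : forall i a, f (Y i a) = Z i a.

Lemma f_wprod w : f (wprod Y w) = 0 \/ f (wprod Y w) = 'X^(size w).
Proof.
elim: w => [|p w IH]; first by right; rewrite /wprod big_nil mor1 expr0.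
have -> : wprod Y (p :: w) = Y p.1 p.2 * wprod Y w by rewrite /wprod big_cons.
rewrite morM hf; case: (eqVneq (Z p.1 p.2) 0) => [->|hz]; first by left; rewrite mul0r.
have -> : Z p.1 p.2 = 'X.
  by move: hz; rewrite /Z; case: existsP => // _; rewrite eqxx.
case: IH => ->; first by left; rewrite mulr0.
by right; rewrite -exprS.
Qed.

Lemma size_f t x : R_lt Y t x -> (size (f x) <= t)%N.
Proof.
move=> [cs [h ->]]; rewrite morsum; elim: cs h => [|c cs IH] /=.
  by rewrite big_nil size_poly0.
move=> /andP [hc hcs]; rewrite big_cons.
apply: leq_trans (size_polyD _ _) _; rewrite geq_max IH // andbT morZ.
apply: leq_trans (size_scale_leq _ _) _.
by case: (f_wprod c.2) => ->; rewrite ?size_poly0 // size_polyXn.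
Qed.

Lemma perm_length1 : perm_length (1 : 'S_n) = 0%N.
Proof.
rewrite /perm_length; apply/eqP; rewrite cards_eq0; apply/eqP/setP => p.
rewrite !inE !perm1; apply/negP => /andP [h1 h2].
by have := ltn_trans h1 h2; rewrite ltnn.
Qed.

Lemma f_minor : f (qminor q Y I L) = 'X^n.
Proof.
rewrite /qminor morsum (bigD1 (1%g : 'S_n)) //= [X in _ + X]big1 ?addr0.
  rewrite (@morZ _ _ _ f) (@morprod _ _ _ f) perm_length1 expr0 scale1r.
  under eq_bigr => k _ do rewrite hf perm1 Zkm eqxx.
  by rewrite prodr_const card_ord.
move=> w hw; rewrite (@morZ _ _ _ f) (@morprod _ _ _ f).
have [k hk] : exists k, w k != k.
  apply/existsP; apply: contraR hw => /existsPn H; apply/eqP/permP => k.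
  by rewrite perm1; apply/eqP; move: (H k); rewrite negbK.
by rewrite (bigD1 k) //= hf Zkm (negbTE hk) mul0r scaler0.
Qed.

End WithF.
End Pol.

Lemma rels_scaled (K : fieldType) (A : algType K) (q : K) (Y : 'I_3 -> 'I_3 -> A) :
  qM3_rels q Y -> qM3_rels q (fun i a => q *: Y i a).
Proof.
case=> r1 r2 r3 r4; split.
- move=> i a b ab; rewrite -!scalerAl -!scalerAr !scalerA r1 // scalerA; congr (_ *: _); by rewrite [LHS]mulrC mulrA.
- move=> i j a ij; rewrite -!scalerAl -!scalerAr !scalerA r2 // scalerA; congr (_ *: _); by rewrite [LHS]mulrC mulrA.
- by move=> i j a b ij ba; rewrite -!scalerAl -!scalerAr !scalerA r3.
- move=> i j a b ij ab; rewrite -!scalerAl -!scalerAr !scalerA r4 //.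
  rewrite scalerBr !scalerA; congr (_ - _ *: _); by rewrite [LHS]mulrC mulrA.
Qed.

Theorem lemma2p1 (K : fieldType) (q : K) (A : algType K)
    (Y : 'I_3 -> 'I_3 -> A) :
  q != 0 -> (forall n : nat, (0 < n)%N -> q ^+ n != 1) ->
  is_Oq_M3 q Y ->
  forall sigma : {lrmorphism A -> A}, bijective sigma ->
  (forall i a : 'I_3, R_ge Y 2 (sigma (Y i a) - Y i a)) ->
  forall (t : nat) (I L : {set 'I_3}), #|I| = t -> #|L| = t ->
  R_ge Y t.+1 (sigma (qminor q Y I L) - qminor q Y I L) /\
  (sigma (qminor q Y I L) = qminor q Y I L <-> deg_is Y (sigma (qminor q Y I L)) t).
Proof.
move=> Hq0 Hqn [Hrel _ Hu] sigma _ Hs t I L HI HL; subst t.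
set M := qminor q Y I L.
have P1 : R_ge Y #|I|.+1 (sigma M - M).
  rewrite /M /qminor (@morsum _ _ _ sigma) -sumrB; apply: ws_sum => w _.
  rewrite (@morZ _ _ _ sigma) (@morprod _ _ _ sigma) -scalerBr; apply: wsZ.
  exact: (@prod_diff _ _ Y sigma Hs _ (fun k => nth ord0 (sorted_idx I) k)
            (fun k => nth ord0 (sorted_idx L) (w k))).
have HM_le : R_le Y #|I| M.
  rewrite /M /qminor; apply: ws_sum => w _; apply: wsZ.
  apply: (@wsW _ _ Y (fun m => m == #|I|)); first by move=> m /eqP ->.
  exact: (@prodY _ _ Y _ (fun k => nth ord0 (sorted_idx I) k)
            (fun k => nth ord0 (sorted_idx L) (w k))).
have [f hf] := Hu _ (@Z _ I L) (@Z_rels _ q I L HL).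
have Hnlt : ~ R_lt Y #|I| M.
  move/(@size_f _ I L _ Y f hf); by rewrite /M (@f_minor _ q I L HL _ Y f hf) size_polyXn ltnn.
have HMdeg : deg_is Y M #|I|.
  split; last by split.
  apply/negP => /eqP HM0; apply: Hnlt; rewrite HM0; exact: ws0.
split => //; split; first by move=> ->.
move=> [_ [Hle _]]; apply/eqP; rewrite -subr_eq0; apply/eqP.
have [g hg] := Hu _ _ (@rels_scaled _ _ q Y Hrel).
apply: (@separate _ _ Y q Hq0 Hqn g hg _ _ _ P1 (@wsB _ _ Y _ _ _ Hle HM_le)) => m h1 h2.
by have := leq_trans h1 h2; rewrite ltnn.
Qed.
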